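(* $$1\le\liminf_{j\to+\infty}\frac{\log p^{(j)}_j}{j\log j}\le\limsup_{j\to+\infty}\frac{\log p^{(j)}_j}{j\log j}\le2.$$
   Context: Let $p_n$ denote the $n$-th prime number. Define $p^{(0)}_n=n$ and recursively $p^{(k+1)}_n=p_{p^{(k)}_n}$ for $k\in\mathbb N_0$. $\log$ is the natural logarithm. *)

(* Defs.v *)
From mathcomp Require Import all_boot all_order all_algebra.
From mathcomp Require Import all_classical all_reals all_analysis.
Set Implicit Arguments. Unset Strict Implicit. Unset Printing Implicit Defensive.
Import Order.TTheory GRing.Theory Num.Theory.

Lemma next_prime_ex (m : nat) : exists p, (m < p) && prime p.
Proof. by case: (prime_above m) => p mp pp; exists p; rewrite mp pp. Qed.

Definition next_prime (m : nat) : nat := ex_minn (next_prime_ex m).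

(* nth_prime n = p_n, the n-th prime, 1-indexed: p_1 = 2, p_2 = 3, ...
   nth_prime 0 = 1 is an unused sentinel. *)
Fixpoint nth_prime (n : nat) : nat :=
  if n is n'.+1 then next_prime (nth_prime n') else 1.

Fixpoint iter_prime (k n : nat) : nat :=
  if k is k'.+1 then nth_prime (iter_prime k' n) else n.

(* Main.v *)
Require Import Defs.
From mathcomp Require Import all_boot all_order all_algebra.
From mathcomp Require Import all_classical all_reals all_analysis.
From mathcomp Require Import zify ring lra.
Import Order.TTheory GRing.Theory Num.Theory.
Set Implicit Arguments. Unset Strict Implicit. Unset Printing Implicit Defensive.

Lemma next_primeP m : m < next_prime m /\ prime (next_prime m) /\
  forall q, m < q -> prime q -> next_prime m <= q.
Proof.
rewrite /next_prime; case: ex_minnP => p /andP[mp pp] Hmin.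
by split=> //; split=> // q mq pq; apply: Hmin; rewrite mq pq.
Qed.

Fixpoint pic (x : nat) : nat := if x is x'.+1 then pic x' + prime x else 0.
Fixpoint prm (x : nat) : nat :=
  if x is x'.+1 then prm x' * (if prime x then x else 1) else 1.

Lemma pic_next m : pic (next_prime m) = (pic m).+1.
Proof.
have [mp [pp Hmin]] := next_primeP m.
have H : forall d, m + d < next_prime m -> pic (m + d) = pic m.
  elim=> [|d IH] Hd; first by rewrite addn0.
  rewrite addnS /= IH; last by lia.
  case Hp: (prime (m + d).+1); last by rewrite addn0.
  have := Hmin (m + d).+1 ltac:(lia) Hp; lia.
have E : next_prime m = (m + (next_prime m - m.+1)).+1 by lia.
by rewrite E /= H -?E ?pp ?addn1 //; lia.
Qed.

Lemma pic_nth n : pic (nth_prime n) = n.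
Proof. by elim: n => [|n IH] //=; rewrite pic_next IH. Qed.

Lemma nth_prime_gt n : n < nth_prime n.
Proof.
elim: n => [|n IH] //=; have [mp _] := next_primeP (nth_prime n); lia.
Qed.

Lemma nth_prime_prime n : 0 < n -> prime (nth_prime n).
Proof. by case: n => // n _ /=; have [_ [pp _]] := next_primeP (nth_prime n). Qed.

Lemma iter_ge k n : n <= iter_prime k n.
Proof.
elim: k => //= k IH; apply: leq_trans IH _; exact: ltnW (nth_prime_gt _).
Qed.

Lemma pic_le K : pic K <= K.
Proof. elim: K => //= K IH; case: (prime K.+1) => /=; lia. Qed.

Lemma pic_mono K d : pic K <= pic (K + d).
Proof. elim: d => [|d IH]; rewrite ?addn0 // addnS /=; lia. Qed.

Lemma prm_gt0 K : 0 < prm K.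
Proof. elim: K => //= K IH; rewrite muln_gt0 IH /=; by case: ifP. Qed.

Lemma prm_ge K d : prm K * K.+1 ^ (pic (K + d) - pic K) <= prm (K + d).
Proof.
elim: d => [|d IH]; first by rewrite addn0 subnn muln1.
rewrite addnS /=; have Hm := pic_mono K d.
case Hp: (prime (K + d).+1) => /=.
  rewrite (_ : pic (K + d) + 1 - pic K = (pic (K + d) - pic K).+1); last by lia.
  rewrite expnS mulnCA mulnC; apply: leq_mul => //.
  lia.
rewrite muln1; apply: leq_trans IH; apply: leq_mul => //; apply: leq_pexp2l => //; lia.
Qed.

Fixpoint prmr (a k : nat) : nat :=
  if k is k'.+1 then prmr a k' * (if prime (a + k) then a + k else 1) else 1.

Lemma prm_split a k : prm (a + k) = prm a * prmr a k.
Proof. elim: k => [|k IH] /=; first by rewrite addn0 muln1. by rewrite addnS /= IH mulnA. Qed.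

Lemma prmr_dvd_fact a k : prmr a k %| (a + k)`!.
Proof.
elim: k => [|k IH] /=; first exact: dvd1n.
rewrite addnS factS mulnC; apply: dvdn_mul => //.
by case: ifP.
Qed.

Lemma prime_dvd_fact p n : prime p -> p %| n`! -> p <= n.
Proof.
move=> pp; elim: n => [|n IH]; first by rewrite dvdn1 => /eqP E; rewrite E in pp.
rewrite factS Euclid_dvdM // => /orP[/dvdn_leq -> //|/IH]; lia.
Qed.

Lemma prmr_coprime a k : coprime (prmr a k) (a`!).
Proof.
elim: k => [|k IH] /=; first exact: coprime1n.
rewrite coprimeMl IH /=; case: ifP => [pp|_]; last exact: coprime1n.
rewrite prime_coprime //; apply/negP => /(prime_dvd_fact pp); lia.
Qed.

Lemma bin_le_pow2 n i : 'C(n, i) <= 2 ^ n.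
Proof.
elim: n i => [|n IH] [|i] //=; first by rewrite expn_gt0.
by rewrite binS expnS mul2n -addnn leq_add.
Qed.

Lemma prm_odd m : 0 < m -> prm m.*2.+1 <= prm m.+1 * 2 ^ m.*2.+1.
Proof.
move=> m0.
have -> : m.*2.+1 = m.+1 + m by lia.
rewrite prm_split leq_mul2l; apply/orP; right.
have Hb := bin_fact (leq_addr m m.+1) .
rewrite addKn in Hb.
have Hd := prmr_dvd_fact m.+1 m.
rewrite -Hb in Hd.
have Hc : coprime (prmr m.+1 m) (m.+1`! * m`!).
  rewrite coprimeMr prmr_coprime /=.
  apply: coprime_dvdr (prmr_coprime m.+1 m); rewrite factS; exact: dvdn_mull.
rewrite Gauss_dvdl // in Hd.
apply: leq_trans (dvdn_leq _ Hd) _; first by rewrite bin_gt0 leq_addr.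
exact: bin_le_pow2.
Qed.

Lemma prm_le N : prm N <= 8 ^ N.
Proof.
elim: N {-2}N (leqnn N) => [|M IH] N HN; first by move: HN; rewrite leqn0 => /eqP ->.
case: N HN => [|N] HN //.
case Hp: (prime N.+1); last first.
  rewrite /= Hp muln1; apply: leq_trans (IH _ _) _; first by lia.
  by rewrite leq_exp2l.
case: (even_prime Hp) => [->|]; first by [].
move=> Ho.
have E : N.+1 = (N./2).*2.+1.
  by have := odd_double_half N.+1; rewrite Ho /=; lia.
rewrite E.
have m0 : 0 < N./2 by move: E Hp; case: (N./2) => // ->.
apply: leq_trans (prm_odd m0) _.
apply: leq_trans (leq_mul (IH _ _) (leqnn _)) _; first by lia.
rewrite (_ : 8 = 2 ^ 3) // -!expnM -expnD leq_exp2l //; lia.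
Qed.

Lemma logn_fact_ext p n N : prime p -> n < N ->
  logn p n`! = \sum_(1 <= k < N) n %/ p ^ k.
Proof.
move=> pp nN; rewrite logn_fact // [RHS](big_cat_nat _ (n := n.+1)) //=.
rewrite [X in _ = _ + X]big1_seq ?addn0 // => k /andP[_].
rewrite mem_iota => /andP[Hk _]; apply: divn_small.
apply: leq_trans (ltn_expl _ (prime_gt1 pp)) _; rewrite leq_exp2l ?prime_gt1 //.
exact: ltnW.
Qed.

Lemma sum_ind_le N t : \sum_(1 <= k < N.+1) (k <= t) = minn N t.
Proof.
elim: N => [|N IH]; first by rewrite big_geq //; lia.
rewrite big_nat_recr //= IH; case: (leqP N.+1 t) => /= H; lia.
Qed.

Lemma logn_cbin p m : prime p -> 0 < m ->
  logn p 'C(m.*2, m) <= trunc_log p m.*2.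
Proof.
move=> pp m0; set t := trunc_log p m.*2; rewrite -addnn.
have Hb := bin_fact (leq_addr m m); rewrite addnK in Hb.
have Cpos : 0 < 'C(m + m, m) by rewrite bin_gt0 leq_addr.
have := congr1 (logn p) Hb.
rewrite lognM ?muln_gt0 ?fact_gt0 // lognM ?fact_gt0 //.
rewrite (logn_fact_ext (N := (m + m).+1) pp) ?ltnS ?leq_addr //.
rewrite (logn_fact_ext (N := (m + m).+1) pp) //.
have Hle : \sum_(1 <= k < (m + m).+1) (m + m) %/ p ^ k <=
   \sum_(1 <= k < (m + m).+1) (m %/ p ^ k + m %/ p ^ k + (k <= t)).
  apply: leq_sum => k _.
  have q0 : 0 < p ^ k by rewrite expn_gt0 prime_gt0.
  case: (leqP k t) => Hk.
    rewrite addn1 -ltnS ltn_divLR //.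
    have := divn_eq m (p ^ k); have := ltn_pmod m q0; nia.
  rewrite divn_small //.
  have := trunc_log_ltn m.*2 (prime_gt1 pp); rewrite -/t -addnn => H.
  apply: leq_trans H _; rewrite leq_exp2l ?prime_gt1 //.
rewrite !big_split /= sum_ind_le in Hle.
lia.
Qed.

Lemma pow_logn_cbin p m : prime p -> 0 < m -> p ^ logn p 'C(m.*2, m) <= m.*2.
Proof.
move=> pp m0; apply: leq_trans (trunc_logP (prime_gt1 pp) _); last by lia.
by rewrite leq_exp2l ?prime_gt1 // logn_cbin.
Qed.

Lemma prod_le_pow (s : seq nat) (f : nat -> nat) c :
  (forall x, x \in s -> f x <= c) -> \prod_(x <- s) f x <= c ^ size s.
Proof.
elim: s => [|x s IH] H; first by rewrite big_nil.
rewrite big_cons /= expnS leq_mul ?H ?mem_head // IH // => y ys.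
by apply: H; rewrite inE ys orbT.
Qed.

Lemma pic_count x : pic x = count prime (iota 0 x.+1).
Proof.
elim: x => [|x IH] //.
have -> : pic x.+1 = pic x + prime x.+1 by [].
by rewrite IH -[x.+2]addn1 iotaD count_cat /= !addn0 add0n.
Qed.

Lemma cbin_le m : 0 < m -> 'C(m.*2, m) <= m.*2 ^ pic m.*2.
Proof.
move=> m0; have Cpos : 0 < 'C(m.*2, m) by rewrite bin_gt0 -addnn leq_addr.
rewrite {1}(prod_prime_decomp Cpos) prime_decompE big_map /=.
apply: leq_trans (prod_le_pow (c := m.*2) _) _.
  move=> p; rewrite mem_primes => /and3P[pp _ _]; exact: pow_logn_cbin.
rewrite leq_pexp2l //; first by lia.
rewrite pic_count -size_filter; apply: uniq_leq_size; first exact: primes_uniq.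
move=> p Hp; have := Hp; rewrite mem_primes => /and3P[pp _ _].
rewrite mem_filter pp mem_iota /= add0n ltnS.
apply: leq_trans (pow_logn_cbin pp m0).
have : 0 < logn p 'C(m.*2, m) by rewrite logn_gt0.
case: (logn _ _) => // k _; rewrite expnS; apply: leq_pmulr; by rewrite expn_gt0 prime_gt0.
Qed.

Lemma cbin_ge m : 2 ^ m <= 'C(m.*2, m).
Proof.
elim: m => [|m IH] //.
rewrite doubleS binS binS expnS mul2n -addnn.
apply: leq_add; first by apply: leq_trans IH _; exact: leq_addl.
by apply: leq_trans IH _; apply: leq_bin2l.
Qed.

Lemma pic_prev n : 0 < n -> pic (nth_prime n).-1 = n.-1.
Proof.
move=> n0; have := pic_nth n.
have pp := nth_prime_prime n0.
have E : nth_prime n = ((nth_prime n).-1).+1 by rewrite prednK // prime_gt0.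
rewrite {1}E /= -E pp; lia.
Qed.

Lemma pic_monotone a b : a <= b -> pic a <= pic b.
Proof. by move=> ab; rewrite -(subnKC ab) pic_mono. Qed.

Lemma U1 n : 0 < n -> nth_prime n <= 4 * n * (trunc_log 2 n + 2).
Proof.
move=> n0; set e := (trunc_log 2 n).+1.
have ne : n < 2 ^ e := trunc_log_ltn n (isT : 1 < 2).
have ee : e.+1 <= 2 ^ e := ltn_expl e (isT : 1 < 2).
set m := (e.*2 + 2) * n.
have Hm : m.*2 = 4 * n * (trunc_log 2 n + 2) by rewrite /m /e; lia.
rewrite -Hm leqNgt; apply/negP => Hlt.
have m0 : 0 < m by rewrite /m; lia.
have Hpic : pic m.*2 <= n.-1.
  rewrite -(pic_prev n0); apply: pic_monotone; lia.
have H1 := cbin_ge m.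
have H2 := cbin_le m0.
have H3 : m.*2 ^ pic m.*2 <= m.*2 ^ n by apply: leq_pexp2l; lia.
have H4 : m.*2 < 2 ^ (e.*2 + 2).
  have -> : 2 ^ (e.*2 + 2) = 4 * 2 ^ e * 2 ^ e.
    by rewrite -addnn expnD expnD mulnC mulnA.
  rewrite Hm; rewrite -/e; rewrite (_ : trunc_log 2 n + 2 = e.+1) //; last by rewrite /e; lia.
  have := leq_mul ne ee; nia.
have H5 : m.*2 ^ n < 2 ^ m.
  rewrite (_ : 2 ^ m = (2 ^ (e.*2 + 2)) ^ n); last by rewrite /m expnM.
  by rewrite ltn_exp2r.
lia.
Qed.

Fixpoint isqrt (n : nat) : nat :=
  if n is n'.+1 then (let r := isqrt n' in if r.+1 * r.+1 <= n then r.+1 else r) else 0.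

Lemma isqrtP n : isqrt n * isqrt n <= n < (isqrt n).+1 * (isqrt n).+1.
Proof.
elim: n => [|n IH] //=; case: ifP => H; move/andP: IH => [H1 H2]; apply/andP; split; nia.
Qed.

Lemma La n : 0 < n ->
  (isqrt (nth_prime n)).+1 ^ (n - isqrt (nth_prime n)) <= 8 ^ (nth_prime n).
Proof.
move=> n0; set N := nth_prime n; set K := isqrt N.
have /andP[HK1 HK2] := isqrtP N; rewrite -/K in HK1 HK2.
have KN : K <= N by nia.
apply: leq_trans (prm_le N).
have := prm_ge K (N - K); rewrite subnKC // => H.
apply: leq_trans H; apply: leq_trans (leq_pmull _ (prm_gt0 K)).
apply: leq_pexp2l => //; rewrite /N pic_nth; have := pic_le K; lia.
Qed.

Lemma pow_big_aux d : 4 * ((10 + d) * (10 + d)) + 8 <= 2 ^ (9 + d).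
Proof.
elim: d => [|d IH] //.
rewrite addnS expnS; set X := 2 ^ (9 + d) in IH *; nia.
Qed.

Lemma pow_big j : 10 <= j -> 4 * j ^ 2 + 8 <= 2 ^ j.-1.
Proof.
move=> Hj; rewrite -(subnKC Hj) -mulnn.
have -> : (10 + (j - 10)).-1 = 9 + (j - 10) by lia.
exact: pow_big_aux.
Qed.

Lemma U2 j k : 10 <= j -> k <= j -> iter_prime k j <= j * (4 * j ^ 2 + 8) ^ k.
Proof.
move=> Hj; elim: k => [|k IH] Hk; first by rewrite expn0 muln1.
have IH' := IH (ltnW Hk).
have xpos : 0 < iter_prime k j by apply: leq_trans (iter_ge k j); lia.
have Hb : iter_prime k j <= 2 ^ (j ^ 2).
  apply: leq_trans IH' _.
  have Hj2 : j <= 2 ^ j by apply: ltnW; apply: ltn_expl.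
  have Hp : (4 * j ^ 2 + 8) ^ k <= (2 ^ j.-1) ^ k by case: (k) => [|k'] //; rewrite leq_exp2r ?pow_big.
  apply: leq_trans (leq_mul Hj2 Hp) _.
  rewrite -expnM -expnD leq_exp2l //; nia.
have Ht : trunc_log 2 (iter_prime k j) <= j ^ 2.
  by rewrite -[X in _ <= X](@trunc_expnK 2) //; apply: leq_trunc_log.
rewrite /= expnS; apply: leq_trans (U1 xpos) _.
have := leq_mul IH' (leqnn (4 * j ^ 2 + 8)).
have : 4 * iter_prime k j * (trunc_log 2 (iter_prime k j) + 2) <= iter_prime k j * (4 * j ^ 2 + 8) by nia.
nia.
Qed.

Section Real.
Variable R : realType.
Local Open Scope ring_scope.

Lemma ln2_le1 : ln (2 : R) <= 1.
Proof. by have := @le_ln1Dx R 1 ltac:(lra); rewrite (_ : 1 + 1 = 2 :> R) //; lra. Qed.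

Lemma ln8_le3 : ln (8 : R) <= 3.
Proof.
rewrite (_ : 8 = 2 ^+ 3 :> R); last by rewrite !exprS expr0; lra.
rewrite lnXn //; have := ln2_le1; rewrite -mulr_natl; lra.
Qed.

Lemma ln_nat_ge0 (n : nat) : 0 <= ln (n%:R : R).
Proof. by case: n => [|n]; [rewrite ln0 | apply: ln_ge0; rewrite ler1n]. Qed.

Lemma ln_le_nat (n : nat) : ln (n.+1%:R : R) <= n%:R.
Proof. by have := @le_ln1Dx R n%:R ltac:(have := ler0n R n; lra); rewrite -natr1 addrC. Qed.

Lemma ln_ler_nat (a b : nat) : (0 < a)%N -> (a <= b)%N -> ln (a%:R : R) <= ln b%:R.
Proof.
move=> a0 ab; rewrite ler_ln ?ler_nat // posrE ltr0n //; exact: leq_trans ab.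
Qed.

Lemma ln_natX (a k : nat) : (0 < a)%N -> ln ((a ^ k)%:R : R) = k%:R * ln a%:R.
Proof. by move=> a0; rewrite natrX lnXn ?ltr0n // mulr_natl. Qed.

Lemma Lr n : (0 < n)%N ->
  n%:R * ln ((nth_prime n)%:R : R) <= 8 * (nth_prime n)%:R.
Proof.
move=> n0; have HLa := La n0.
set N := nth_prime n in HLa *; set K := isqrt N in HLa *.
have /andP[HK1 HK2] := isqrtP N; rewrite -/K in HK1 HK2.
have N0 : (0 < N)%N by rewrite /N; have := nth_prime_gt n; lia.
have h1 : ln (N%:R : R) <= 2 * ln (K.+1)%:R.
  apply: le_trans (ln_ler_nat N0 (ltnW HK2)) _.
  by rewrite mulnn ln_natX.
have h2 : ln ((K.+1)%:R : R) <= K%:R := ln_le_nat K.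
have h3 : (n - K)%:R * ln ((K.+1)%:R : R) <= N%:R * ln 8.
  have := @ln_ler_nat (K.+1 ^ (n - K)) (8 ^ N) ltac:(by rewrite expn_gt0) HLa; rewrite !ln_natX //.
have h4 := ln8_le3.
have h5 : (K%:R * K%:R : R) <= N%:R by rewrite -natrM ler_nat.
have hlK := ln_nat_ge0 K.+1.
have hlN := ln_nat_ge0 N.
have hK0 := ler0n R K.
have hN0 := ler0n R N.
case: (leqP n K) => nK.
  have : (n%:R : R) <= K%:R by rewrite ler_nat.
  nra.
have E : (n%:R : R) = (n - K)%:R + K%:R by rewrite -natrD subnK // ltnW.
have hnK := ler0n R (n - K).
rewrite E; nra.
Qed.
End Real.

Section Real2.
Variable R : realType.
Local Open Scope ring_scope.

Lemma step_low (n : nat) : (2 <= n)%N ->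
  ln (n%:R : R) + ln (ln (n%:R : R)) - ln 8 <= ln ((nth_prime n)%:R : R).
Proof.
move=> n2; have n0 : (0 < n)%N by lia.
have HL := @Lr R n n0.
set N := nth_prime n in HL *.
have nN : (n < N)%N by exact: nth_prime_gt.
have lnn : 0 < ln (n%:R : R) by apply: ln_gt0; rewrite ltr1n.
have lnN : ln (n%:R : R) <= ln (N%:R) by apply: ln_ler_nat => //; exact: ltnW.
have lnN0 : 0 < ln (N%:R : R) by lra.
have Hl := lnN; rewrite -ler_ln ?posrE // in Hl.
have : ln (n%:R * ln (N%:R : R)) <= ln (8 * N%:R).
  by rewrite ler_ln ?posrE ?mulr_gt0 ?ltr0n //; lia.
rewrite !lnM ?posrE ?ltr0n //; try lia.
have : ln (ln (n%:R : R)) <= ln (ln (N%:R : R)) by rewrite ler_ln ?posrE.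
lra.
Qed.

Lemma y_ge0 k j : 0 <= ln ((iter_prime k j)%:R : R).
Proof. exact: ln_nat_ge0. Qed.

Lemma lowA j : (2 <= j)%N -> 8 * expR 1 <= ln (j%:R : R) ->
  forall k : nat, ln (j%:R : R) + k%:R <= ln ((iter_prime k j)%:R : R).
Proof.
move=> j2 Hj; elim=> [|k IH]; first by rewrite /= addr0.
have x2 : (2 <= iter_prime k j)%N by apply: leq_trans (iter_ge k j).
have := step_low x2; rewrite /= -/(iter_prime k j).
have e0 := expR_gt0 (1 : R).
have k0 := ler0n R k.
have : ln (8 * expR 1) <= ln (ln ((iter_prime k j)%:R : R)).
  by rewrite ler_ln ?posrE ?mulr_gt0 //; lra.
rewrite lnM ?posrE ?expR_gt0 // expRK -(natr1 k).
lra.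
Qed.
Lemma lowB j (M : R) : (2 <= j)%N -> 8 * expR 1 <= ln (j%:R : R) -> 0 < M ->
  8 <= j%:R / M -> forall k : nat,
  (k%:R - j%:R / M - 1) * (ln (j%:R / M) - ln 8) <= ln ((iter_prime k j)%:R : R).
Proof.
move=> j2 Hj M0; set s := j%:R / M; set D := ln s - ln 8 => H8.
have s0 : 0 < s by lra.
have D0 : 0 <= D.
  by rewrite /D subr_ge0 ler_ln ?posrE //; lra.
have HA := lowA j2 Hj.
have lj0 := ln_nat_ge0 R j.
elim=> [|k IH].
  have := y_ge0 0 j; have : (0%:R - s - 1) * D <= 0 by rewrite mulr_le0_ge0 //; lra.
  lra.
have A1 := HA k; have A2 := HA k.+1; have Y := y_ge0 k.+1 j.
rewrite -(natr1 k) in A2 *.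
case: (ltrP s k%:R) => Hk.
  have x2 : (2 <= iter_prime k j)%N by apply: leq_trans (iter_ge k j).
  have := step_low x2; rewrite -/(iter_prime k j) => St.
  have : ln s <= ln (ln ((iter_prime k j)%:R : R)).
    by rewrite ler_ln ?posrE //; lra.
  rewrite /= in Y A2 *; rewrite /D in IH *; nra.
have : (k%:R + 1 - s - 1) * D <= 0 by rewrite mulr_le0_ge0 //; lra.
lra.
Qed.
Lemma up_y j : (10 <= j)%N ->
  ln ((iter_prime j j)%:R : R) <= ln j%:R + j%:R * (ln 12 + 2 * ln j%:R).
Proof.
move=> j10; have j0 : (0 < j)%N by lia.
have H := U2 j10 (leqnn j).
have B0 : (0 < 4 * j ^ 2 + 8)%N by lia.
apply: le_trans (@ln_ler_nat R _ _ _ H) _; first by apply: leq_trans (iter_ge j j).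
rewrite natrM lnM ?posrE ?ltr0n ?expn_gt0 ?B0 // ln_natX //.
have H2 : (4 * j ^ 2 + 8 <= 12 * j ^ 2)%N by rewrite -mulnn; nia.
have := @ln_ler_nat R _ _ B0 H2; rewrite natrM lnM ?posrE ?ltr0n ?expn_gt0 ?j0 // ln_natX //.
have := ler0n R j; nra.
Qed.

Lemma ev_ln (c : R) : exists N : nat, forall j : nat, (N <= j)%N -> c <= ln (j%:R : R).
Proof.
exists (Num.truncn (expR c)).+1 => j Hj.
have H1 := truncnS_gt (expR c).
have H2 : ((Num.truncn (expR c)).+1%:R : R) <= j%:R by rewrite ler_nat.
have e0 := expR_gt0 c.
rewrite -{1}(expRK c) ler_ln ?posrE //; lra.
Qed.
End Real2.

Section Fin.
Variable R : realType.
Local Open Scope ring_scope.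

Lemma upper_ev (e : R) : 0 < e -> exists N : nat, forall j : nat, (N <= j)%N ->
  ln ((iter_prime j j)%:R : R) / (j%:R * ln j%:R) <= 2 + e.
Proof.
move=> e0.
have l12 : 0 <= ln (12 : R) by apply: ln_ge0; lra.
have [N HN] := ev_ln (10 + 2 / e + 2 * ln 12 / e : R).
exists N => j Hj; have HL := HN j Hj.
have c1 : 0 <= 2 / e by apply: divr_ge0; lra.
have c2 : 0 <= 2 * ln 12 / e by apply: divr_ge0; lra.
have j0 : (0 < j)%N.
  case: (j) HL => //; rewrite [ln (0%:R)]ln0 //; lra.
have jL : ln (j%:R : R) < j%:R by apply: ln_sublinear; rewrite ltr0n.
have j10 : (10 <= j)%N by rewrite -(ler_nat R); lra.
have Hy := up_y R j10.
set L := ln (j%:R : R) in HL jL Hy *.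
have L0 : 0 < L by lra.
have h1 : 2 <= j%:R * e by rewrite -ler_pdivrMr //; lra.
have h2 : 2 * ln 12 <= L * e by rewrite -ler_pdivrMr //; lra.
rewrite ler_pdivrMr ?mulr_gt0 ?ltr0n //.
have p1 : 2 * L <= j%:R * e * L by rewrite ler_wpM2r //; lra.
have p2 : j%:R * (2 * ln 12) <= j%:R * (L * e) by rewrite ler_wpM2l //; lra.
nra.
Qed.

Lemma lower_ev (e : R) : 0 < e -> exists N : nat, forall j : nat, (N <= j)%N ->
  1 - e <= ln ((iter_prime j j)%:R : R) / (j%:R * ln j%:R).
Proof.
move=> e0.
set M : R := 3 / e + 1.
have c3 : 0 <= 3 / e by apply: divr_ge0; lra.
have M1 : 1 <= M by rewrite /M; lra.
have M0 : 0 < M by lra.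
have lM : 0 <= ln M by apply: ln_ge0.
have l8 : 0 <= ln (8 : R) by apply: ln_ge0; lra.
set b := ln (8 : R) + ln M.
have b0 : 0 <= b by rewrite /b; lra.
have c4 : 0 <= 3 * b / e by apply: divr_ge0; lra.
have e1 := expR_gt0 (1 : R).
have [N HN] := ev_ln (8 * expR 1 + 2 + 8 * M + 3 / e + 3 * b / e : R).
exists N => j Hj; have HL := HN j Hj.
have j0 : (0 < j)%N.
  case: (j) HL => //; rewrite [ln (0%:R)]ln0 //; lra.
have jL : ln (j%:R : R) < j%:R by apply: ln_sublinear; rewrite ltr0n.
have j2 : (2 <= j)%N by rewrite -(ler_nat R); lra.
have H8 : 8 <= j%:R / M by rewrite ler_pdivlMr //; lra.
have Hy := lowB j2 (ltac:(lra) : 8 * expR 1 <= ln (j%:R : R)) M0 H8 j.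
rewrite ln_div ?posrE ?ltr0n // in Hy.
set a := M^-1.
have Ea : j%:R / M = j%:R * a by [].
rewrite Ea in Hy.
have aM : a * M = 1 by rewrite /a mulVf //; lra.
have a0 : 0 < a by rewrite /a invr_gt0.
set L := ln (j%:R : R) in HL jL Hy *.
have L0 : 0 < L by lra.
have hMe : 3 <= M * e by rewrite /M mulrDl divfK; lra.
have h3a : 3 * a <= e.
  have : a * 3 <= a * (M * e) by rewrite ler_wpM2l //; lra.
  by rewrite mulrA aM mul1r mulrC.
have h1 : 3 <= j%:R * e by rewrite -ler_pdivrMr //; lra.
have h2 : 3 * b <= L * e by rewrite -ler_pdivrMr //; lra.
rewrite ler_pdivlMr ?mulr_gt0 ?ltr0n //.
have jr0 : 0 < (j%:R : R) by rewrite ltr0n.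
have p1 : 3 * L <= j%:R * e * L by rewrite ler_wpM2r //; lra.
have p2 : j%:R * (3 * b) <= j%:R * (L * e) by rewrite ler_wpM2l //; lra.
have p3 : (3 * a) * (j%:R * L) <= e * (j%:R * L) by rewrite ler_wpM2r // mulr_ge0 //; lra.
have p4 : 0 <= j%:R * a * b by rewrite !mulr_ge0 //; lra.
move: Hy; rewrite (_ : L - ln M - ln 8 = L - b); last by rewrite /b; lra.
move=> Hy; nra.
Qed.
End Fin.

Section Glue.
Local Open Scope ring_scope.
Local Open Scope ereal_scope.
Lemma esup_le_ev (R : realType) (u : (\bar R)^nat) (a : R) :
  (forall e : R, (0 < e)%R -> exists N, forall j, (N <= j)%N -> u j <= (a + e)%:E) ->
  limn_esup u <= a%:E.
Proof.
move=> H; apply/lee_addgt0Pr => e e0.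
have [N HN] := H e e0.
rewrite limn_esup_lim; apply: lime_le; first exact: is_cvg_esups.
exists N => // m /= Hm.
apply: ge_ereal_sup => _ [k /= Hk <-].
rewrite -EFinD; apply: HN; exact: leq_trans Hm Hk.
Qed.

Lemma einf_ge_ev (R : realType) (u : (\bar R)^nat) (a : R) :
  (forall e : R, (0 < e)%R -> exists N, forall j, (N <= j)%N -> (a - e)%:E <= u j) ->
  a%:E <= limn_einf u.
Proof.
move=> H; apply/lee_subgt0Pr => e e0.
have [N HN] := H e e0.
rewrite limn_einf_lim; apply: lime_ge; first exact: is_cvg_einfs.
exists N => // m /= Hm.
apply: le_ereal_inf_tmp => _ [k /= Hk <-].
rewrite -EFinB; apply: HN; exact: leq_trans Hm Hk.
Qed.

End Glue.

Unset Implicit Arguments.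
Local Open Scope ring_scope.
Local Open Scope ereal_scope.

Theorem corollary12 (R : realType) :
  let u := fun j : nat =>
    ((ln ((iter_prime j j)%:R : R)) / (j%:R * ln (j%:R : R)))%:E in
  1%:E <= limn_einf u /\ limn_einf u <= limn_esup u /\ limn_esup u <= 2%:E.
Proof.
move=> u; split; [|split].
- apply: einf_ge_ev => e e0; have [N HN] := lower_ev e0.
  by exists N => j Hj; rewrite /u lee_fin; exact: HN.
- exact: limn_einf_sup.
- apply: esup_le_ev => e e0; have [N HN] := upper_ev e0.
  by exists N => j Hj; rewrite /u lee_fin; exact: HN.
Qed.
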